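(* For every simple transitive type $T$, $I\ \llbracket T\cdot T\to T\rrbracket_e\ I$; that is, whenever $x\,\llbracket T\rrbracket_e\,y$ and $y\,\llbracket T\rrbracket_e\,z$, also $x\,\llbracket T\rrbracket_e\,z$.
   Context: Terms are those of the pure untyped $\lambda$-calculus, up to $\alpha$-equivalence; $=_{\beta\eta}$ is $\beta\eta$-convertibility; $I:=\lambda x.x$. Relational types: $R ::= X \mid R\to R' \mid \forall X.R \mid R^{\cup} \mid R\cdot R' \mid t$ (last form: promotion of a term). A relation on terms is $\beta\eta$-closed if closed under replacing either related term by a $\beta\eta$-equal one; $\mathcal{R}$ is the set of such relations; environments map type variables to $\mathcal{R}$. Interpretation: $\llbracket X\rrbracket_\gamma=\gamma(X)$; $t\,\llbracket R\to R'\rrbracket_\gamma\,t'$ iff for all $a,a'$ with $a\,\llbracket R\rrbracket_\gamma\,a'$, $t\,a\,\llbracket R'\rrbracket_\gamma\,t'\,a'$; $\llbracket \forall X.R\rrbracket_\gamma=\bigcap_{r\in\mathcal{R}}\llbracket R\rrbracket_{\gamma[X\mapsto r]}$; $t\,\llbracket R^\cup\rrbracket_\gamma\,t'$ iff $t'\,\llbracket R\rrbracket_\gamma\,t$; $t\,\llbracket R\cdot R'\rrbracket_\gamma\,t'$ iff $\exists t''$, $t\,\llbracket R\rrbracket_\gamma\,t''$ and $t''\,\llbracket R'\rrbracket_\gamma\,t'$; $\llbracket \hat t\rrbracket_\gamma=\{(t,t')\mid \hat t\,t=_{\beta\eta}t'\}$. $e$ maps every type variable to $=_{\beta\eta}$.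 Polarities $p\in\{+,-\}$, $\bar p$ the other; $\forall^p$: type variables are $\forall^p$; if $R$ is $\forall^{\bar p}$ and $R'$ is $\forall^p$ then $R\to R'$ is $\forall^p$; if $R$ is $\forall^+$ then $\forall X.R$ is $\forall^+$; if $R$ is $\forall^p$ then so is $R^\cup$; a promotion of $t=_{\beta\eta}I$ is $\forall^p$. $P$ ranges over $\forall^+$ types, $N$ over $\forall^-$ types. Write $t\bullet R:=t\cdot R\cdot t^\cup$. Simple transitive types: $T ::= P \mid P\to T \mid N\to T \mid t\bullet T$ ($t$ any term). *)

(* Defs.v *)
From Stdlib Require Import Arith.

Inductive term : Type :=
| Var : nat -> term
| App : term -> term -> term
| Lam : term -> term.

Fixpoint lift (d c : nat) (t : term) : term :=
  match t with
  | Var n => if n <? c then Var n else Var (n + d)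
  | App t1 t2 => App (lift d c t1) (lift d c t2)
  | Lam t1 => Lam (lift d (S c) t1)
  end.

Fixpoint subst (k : nat) (u : term) (t : term) : term :=
  match t with
  | Var n => if n =? k then lift k 0 u
             else if k <? n then Var (pred n) else Var n
  | App t1 t2 => App (subst k u t1) (subst k u t2)
  | Lam t1 => Lam (subst (S k) u t1)
  end.

Inductive bconv : term -> term -> Prop :=
| bc_beta : forall t u, bconv (App (Lam t) u) (subst 0 u t)
| bc_eta : forall t, bconv (Lam (App (lift 1 0 t) (Var 0))) t
| bc_refl : forall t, bconv t t
| bc_sym : forall t u, bconv t u -> bconv u t
| bc_trans : forall t u v, bconv t u -> bconv u v -> bconv t v
| bc_app : forall t t' u u', bconv t t' -> bconv u u' -> bconv (App t u) (App t' u')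
| bc_lam : forall t t', bconv t t' -> bconv (Lam t) (Lam t').

Definition I : term := Lam (Var 0).

Inductive rtype : Type :=
| RVar : nat -> rtype
| RArr : rtype -> rtype -> rtype
| RAll : nat -> rtype -> rtype
| RConv : rtype -> rtype
| RComp : rtype -> rtype -> rtype
| RTerm : term -> rtype.

Definition rel := term -> term -> Prop.

Definition bclosed (r : rel) : Prop :=
  forall t t' u u', bconv t u -> bconv t' u' -> r t t' -> r u u'.

Definition env := nat -> rel.

Definition upd (g : env) (X : nat) (r : rel) : env :=
  fun Y => if Y =? X then r else g Y.

Fixpoint interp (g : env) (R : rtype) : rel :=
  match R with
  | RVar X => g X
  | RArr R1 R2 => fun t t' =>
      forall a a', interp g R1 a a' -> interp g R2 (App t a) (App t' a')
  | RAll X R1 => fun t t' =>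
      forall r : rel, bclosed r -> interp (upd g X r) R1 t t'
  | RConv R1 => fun t t' => interp g R1 t' t
  | RComp R1 R2 => fun t t' =>
      exists t'', interp g R1 t t'' /\ interp g R2 t'' t'
  | RTerm s => fun t t' => bconv (App s t) t'
  end.

Definition e : env := fun _ => bconv.

Inductive pol := Pos | Neg.
Definition flip (p : pol) : pol := match p with Pos => Neg | Neg => Pos end.

Inductive isForall : pol -> rtype -> Prop :=
| fa_var : forall p X, isForall p (RVar X)
| fa_arr : forall p R R', isForall (flip p) R -> isForall p R' -> isForall p (RArr R R')
| fa_all : forall X R, isForall Pos R -> isForall Pos (RAll X R)
| fa_conv : forall p R, isForall p R -> isForall p (RConv R)
| fa_term : forall p t, bconv t I -> isForall p (RTerm t).

Definition bullet (t : term) (R : rtype) : rtype :=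
  RComp (RComp (RTerm t) R) (RConv (RTerm t)).

Inductive simple_trans : rtype -> Prop :=
| st_P : forall P, isForall Pos P -> simple_trans P
| st_PT : forall P T, isForall Pos P -> simple_trans T -> simple_trans (RArr P T)
| st_NT : forall N T, isForall Neg N -> simple_trans T -> simple_trans (RArr N T)
| st_bullet : forall t T, simple_trans T -> simple_trans (bullet t T).

(* Main.v *)
Require Import Defs.
From Stdlib Require Import Arith Lia FunctionalExtensionality.

Fixpoint ren (f : nat -> nat) (t : term) : term :=
  match t with
  | Var n => Var (f n)
  | App a b => App (ren f a) (ren f b)
  | Lam a => Lam (ren (fun n => match n with 0 => 0 | S m => S (f m) end) a)
  end.

Definition up (f : nat -> nat) : nat -> nat :=
  fun n => match n with 0 => 0 | S m => S (f m) end.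

Fixpoint upk (k : nat) (f : nat -> nat) : nat -> nat :=
  match k with 0 => f | S k' => up (upk k' f) end.

Lemma upk_spec : forall k f n, upk k f n = if n <? k then n else k + f (n - k).
Proof.
  induction k; intros f n; simpl.
  - rewrite Nat.sub_0_r. reflexivity.
  - unfold up. destruct n as [|n]; simpl. reflexivity.
    rewrite IHk. change (S n <? S k) with (n <? k). destruct (n <? k); reflexivity.
Qed.

Lemma ren_lift : forall u j k f,
  ren (upk j (upk k f)) (lift k j u) = lift k j (ren (upk j f) u).
Proof.
  induction u; intros j k f; simpl.
  - destruct (n <? j) eqn:E.
    + simpl. rewrite !upk_spec, E. simpl. rewrite E. reflexivity.
    + simpl. rewrite !upk_spec. rewrite E. simpl.
      apply Nat.ltb_ge in E.
      replace (n + k - j - k) with (n - j) by lia.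
      repeat match goal with |- context [?a <? ?b] => destruct (Nat.ltb_spec a b) end;
        try lia; f_equal; lia.
  - rewrite IHu1, IHu2. reflexivity.
  - f_equal. apply (IHu (S j) k f).
Qed.

Lemma ren_subst : forall t k u f,
  ren (upk k f) (subst k u t) = subst k (ren f u) (ren (upk (S k) f) t).
Proof.
  induction t; intros k u f.
  - simpl. destruct (Nat.eqb_spec n k).
    + subst n. simpl ren. change (up (upk k f)) with (upk (S k) f).
      rewrite (upk_spec (S k)). rewrite (proj2 (Nat.ltb_lt k (S k))) by lia.
      simpl. rewrite Nat.eqb_refl.
      pose proof (ren_lift u 0 k f) as H. simpl in H. exact H.
    + simpl ren. change (up (upk k f)) with (upk (S k) f). rewrite (upk_spec (S k)).
      destruct (Nat.ltb_spec k n).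
      * simpl.
        replace (n - S k) with (Nat.pred n - k) by lia.
        rewrite upk_spec.
        repeat match goal with |- context [?a <? ?b] => destruct (Nat.ltb_spec a b) end;
          repeat match goal with |- context [?a =? ?b] => destruct (Nat.eqb_spec a b) end;
          try lia; f_equal; lia.
      * simpl. rewrite upk_spec.
        repeat match goal with |- context [?a <? ?b] => destruct (Nat.ltb_spec a b) end;
          repeat match goal with |- context [?a =? ?b] => destruct (Nat.eqb_spec a b) end;
          try lia; f_equal; lia.
  - simpl. rewrite IHt1, IHt2. reflexivity.
  - simpl. f_equal. apply (IHt (S k) u f).
Qed.

Lemma ren_bconv : forall t u, bconv t u -> forall f, bconv (ren f t) (ren f u).
Proof.
  induction 1; intro f.
  - simpl. pose proof (ren_subst t 0 u f) as H. simpl in H.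
    change (upk 0 f) with f in H. rewrite H. apply bc_beta.
  - simpl.
    pose proof (ren_lift t 0 1 f) as H. simpl in H. unfold up in H.
    rewrite H. apply bc_eta.
  - apply bc_refl.
  - apply bc_sym; auto.
  - eapply bc_trans; eauto.
  - simpl. apply bc_app; auto.
  - simpl. apply bc_lam; auto.
Qed.

Fixpoint cb (m : nat) (t : term) : Prop :=
  match t with
  | Var n => n < m
  | App a b => cb m a /\ cb m b
  | Lam a => cb (S m) a
  end.

Lemma cb_mono : forall t m m', cb m t -> m <= m' -> cb m' t.
Proof.
  induction t; simpl; intros m m' H Hle.
  - lia.
  - destruct H; split; eauto.
  - apply (IHt (S m)); auto; lia.
Qed.

Lemma cb_ex : forall t, exists m, cb m t.
Proof.
  induction t; simpl.
  - exists (S n). lia.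
  - destruct IHt1 as [m1 H1], IHt2 as [m2 H2]. exists (m1 + m2).
    split; [apply (cb_mono _ m1)|apply (cb_mono _ m2)]; auto; lia.
  - destruct IHt as [m H]. exists m. apply (cb_mono _ m); auto.
Qed.

Definition swf (m : nat) (n : nat) : nat :=
  if n =? m then 0 else if n <? m then S n else n.

Lemma ren_swf : forall t j m, cb (j + m) t -> ren (upk j (swf m)) t = lift 1 j t.
Proof.
  induction t; simpl; intros j m H.
  - rewrite upk_spec. destruct (n <? j) eqn:E. reflexivity.
    apply Nat.ltb_ge in E. unfold swf.
    destruct (n - j =? m) eqn:E1; [apply Nat.eqb_eq in E1; lia|].
    destruct (n - j <? m) eqn:E2; [|apply Nat.ltb_ge in E2; lia].
    f_equal. lia.
  - destruct H. rewrite IHt1, IHt2; auto.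
  - f_equal. apply (IHt (S j) m). exact H.
Qed.

Lemma ext : forall x y, (forall a, bconv (App x a) (App y a)) -> bconv x y.
Proof.
  intros x y H.
  destruct (cb_ex x) as [m1 H1]. destruct (cb_ex y) as [m2 H2].
  set (m := m1 + m2).
  assert (Hx : cb m x) by (apply (cb_mono _ m1); auto; unfold m; lia).
  assert (Hy : cb m y) by (apply (cb_mono _ m2); auto; unfold m; lia).
  pose proof (ren_bconv _ _ (H (Var m)) (swf m)) as Hr. simpl in Hr.
  rewrite (ren_swf x 0 m Hx : ren (swf m) x = lift 1 0 x), (ren_swf y 0 m Hy : ren (swf m) y = lift 1 0 y) in Hr.
  unfold swf in Hr. rewrite Nat.eqb_refl in Hr.
  eapply bc_trans. apply bc_sym, bc_eta.
  eapply bc_trans. apply bc_lam, Hr. apply bc_eta.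
Qed.

Lemma upd_bclosed : forall g X r, (forall Y, bclosed (g Y)) -> bclosed r ->
  forall Y, bclosed (upd g X r Y).
Proof. intros. unfold upd. destruct (Y =? X); auto. Qed.

Lemma interp_bclosed : forall R g, (forall X, bclosed (g X)) -> bclosed (interp g R).
Proof.
  induction R; intros g Hg; simpl; unfold bclosed; intros t0 t0' u0 u0' H1 H2 H.
  - eapply Hg; eauto.
  - intros a a' Ha. eapply (IHR2 g Hg); [apply bc_app; [exact H1|apply bc_refl]
      | apply bc_app; [exact H2|apply bc_refl] | auto].
  - intros r Hr. eapply (IHR (upd g n r)); [apply upd_bclosed; auto | exact H1 | exact H2 | auto].
  - eapply (IHR g Hg); eauto.
  - destruct H as [w [Ha Hb]]. exists w. split.
    + eapply (IHR1 g Hg); [exact H1|apply bc_refl|exact Ha].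
    + eapply (IHR2 g Hg); [apply bc_refl|exact H2|exact Hb].
  - eapply bc_trans; [|exact H2]. eapply bc_trans; [|exact H].
    apply bc_app; [apply bc_refl|apply bc_sym; exact H1].
Qed.

Lemma bconv_bclosed : bclosed bconv.
Proof.
  unfold bclosed; intros. eapply bc_trans; [apply bc_sym; eauto|].
  eapply bc_trans; eauto.
Qed.

Lemma e_bclosed : forall R, bclosed (interp e R).
Proof. intros; apply interp_bclosed. intros; apply bconv_bclosed. Qed.

Lemma upd_e : forall X, upd e X bconv = e.
Proof.
  intro X. apply functional_extensionality. intro Y. unfold upd, e.
  destruct (Y =? X); reflexivity.
Qed.

Lemma lift0 : forall t c, lift 0 c t = t.
Proof.
  induction t; intro c; simpl.
  - destruct (n <? c); f_equal; lia.
  - rewrite IHt1, IHt2; auto.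
  - rewrite IHt; auto.
Qed.

Lemma appI : forall t x, bconv t I -> bconv (App t x) x.
Proof.
  intros t x H. eapply bc_trans. apply bc_app; [exact H|apply bc_refl].
  unfold I. pose proof (bc_beta (Var 0) x) as Hb. simpl in Hb.
  rewrite lift0 in Hb. exact Hb.
Qed.

Lemma polar : forall p R, isForall p R ->
  (p = Pos -> forall x y, interp e R x y -> bconv x y) /\
  (p = Neg -> forall x y, bconv x y -> interp e R x y).
Proof.
  induction 1; simpl.
  - split; intros; auto.
  - destruct IHisForall1 as [A1 B1], IHisForall2 as [A2 B2].
    split; intros Hp x y Hxy; subst; simpl in *.
    + apply ext. intro a. apply A2; auto. apply Hxy. apply B1; auto. apply bc_refl.
    + intros a a' Ha. apply B2; auto. apply bc_app; auto.
  - destruct IHisForall as [A _]. split; intros Hp; [|discriminate].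
    intros x y Hxy. apply A; auto. pose proof (Hxy bconv bconv_bclosed) as H1.
    rewrite upd_e in H1. exact H1.
  - destruct IHisForall as [A B]. split; intros Hp x y Hxy.
    + apply bc_sym. apply A; auto.
    + apply B; auto. apply bc_sym; auto.
  - split; intros _ x y Hxy.
    + apply bc_trans with (App t x); [apply bc_sym, appI; auto|exact Hxy].
    + apply bc_trans with x; [apply appI; auto|exact Hxy].
Qed.

Lemma trans_st : forall T, simple_trans T ->
  forall x y z, interp e T x y -> interp e T y z -> interp e T x z.
Proof.
  induction 1; intros x y z H1 H2.
  - pose proof (proj1 (polar _ _ H) eq_refl _ _ H1) as Hxy.
    eapply (e_bclosed P); [apply bc_sym; exact Hxy|apply bc_refl|exact H2].
  - simpl in *. intros a a' Ha.
    pose proof (proj1 (polar _ _ H) eq_refl _ _ Ha) as Haa.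
    assert (Ha' : interp e P a' a') by
      (eapply (e_bclosed P); [exact Haa|apply bc_refl|exact Ha]).
    eapply IHsimple_trans; [apply H1; exact Ha|apply H2; exact Ha'].
  - simpl in *. intros a a' Ha.
    assert (Ha' : interp e N a a) by (apply (proj2 (polar _ _ H) eq_refl); apply bc_refl).
    eapply IHsimple_trans; [apply H1; exact Ha'|apply H2; exact Ha].
  - unfold bullet in *. simpl in *.
    destruct H1 as [w1 [[u1 [Hu1 HT1]] Hw1]].
    destruct H2 as [w2 [[u2 [Hu2 HT2]] Hw2]].
    exists w2. split; [|exact Hw2]. exists u1. split; [exact Hu1|].
    apply (IHsimple_trans u1 u2 w2); [|exact HT2].
    eapply (e_bclosed T); [apply bc_refl| |exact HT1].
    eapply bc_trans; [apply bc_sym; exact Hw1|exact Hu2].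
Qed.

Theorem mainTheorem13 : forall T : rtype, simple_trans T ->
  interp e (RArr (RComp T T) T) I I.
Proof.
  intros T HT a a' [b [H1 H2]]. simpl.
  pose proof (trans_st T HT _ _ _ H1 H2) as H.
  eapply (e_bclosed T); [| |exact H]; apply bc_sym, appI; apply bc_refl.
Qed.
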